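(* Let $n\ge 1$ and let $r_1,\ldots,r_n$ be independent Rademacher random variables (each equal to $\pm1$ with probability $1/2$). For $x\in\mathbb{R}^n$ and a positive integer $q$ define $$\mathbf{R}_q(x) = \mathbf{E}\Big(\sum_{i\neq j} x_i x_j r_i r_j\Big)^q,$$ where the sum runs over ordered pairs $(i,j)$ with $i,j\in\{1,\ldots,n\}$, $i\ne j$. Then for every positive integer $q$, $\mathbf{R}_q(x)$ is a Schur-concave function of $(x_1^2,\ldots,x_n^2)$.
   Context: A function $f$ on $[0,\infty)^n$ is Schur-concave if $f(a)\ge f(b)$ whenever $a$ is majorized by $b$ (the sum of the $k$ largest entries of $a$ is at most that of $b$ for every $k$, with equal total sums). *)

(* Defs.v *)
From mathcomp Require Import all_boot all_order all_algebra.
Set Implicit Arguments. Unset Strict Implicit. Unset Printing Implicit Defensive.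
Import Order.TTheory GRing.Theory Num.Theory.
Local Open Scope ring_scope.

Definition rsign {R : numDomainType} (b : bool) : R := if b then 1 else -1.

Definition chaos {R : numDomainType} (n : nat) (x : 'I_n -> R)
  (r : {ffun 'I_n -> bool}) : R :=
  \sum_(i < n) \sum_(j < n | i != j) x i * x j * rsign (r i) * rsign (r j).

(* R_q(x) = E (sum_{i<>j} x_i x_j r_i r_j)^q, where (r_1..r_n) are independent
   Rademacher variables, i.e. uniformly distributed on {-1,1}^n. *)
Definition Rq {R : numFieldType} (n q : nat) (x : 'I_n -> R) : R :=
  (2 ^+ n)^-1 * \sum_(r : {ffun 'I_n -> bool}) chaos x r ^+ q.

Definition sum_largest {R : realDomainType} (n k : nat) (a : 'I_n -> R) : R :=
  \sum_(v <- take k (sort (fun u w : R => w <= u) [seq a i | i <- enum 'I_n])) v.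

Definition majorized {R : realDomainType} (n : nat) (a b : 'I_n -> R) : Prop :=
  (forall k : nat, (k <= n)%N -> sum_largest k a <= sum_largest k b) /\
  \sum_(i < n) a i = \sum_(i < n) b i.

Definition schur_concave {R : realDomainType} (n : nat) (f : ('I_n -> R) -> R) : Prop :=
  forall a b : 'I_n -> R, (forall i, 0 <= a i) -> (forall i, 0 <= b i) ->
    majorized a b -> f b <= f a.

(* Main.v *)
Require Import Defs.
From mathcomp Require Import all_boot all_order all_algebra.
From mathcomp Require Import fingroup perm.
From mathcomp Require Import ring lra.
From mathcomp.multinomials Require Import mpoly.
From Stdlib Require Import FunctionalExtensionality.
Import Order.TTheory GRing.Theory Num.Theory.
Local Open Scope ring_scope.
Set Implicit Arguments. Unset Strict Implicit. Unset Printing Implicit Defensive.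

Definition pair_prop (R : realFieldType) (n : nat) (F : ('I_n -> R) -> R) :=
  forall (a b : 'I_n -> R) (i j : 'I_n), i != j ->
   (forall k, 0 <= a k) -> (forall k, 0 <= b k) ->
   (forall k, k != i -> k != j -> a k = b k) ->
   a i + a j = b i + b j -> b i * b j <= a i * a j -> F b <= F a.

Lemma pair_swap (R : realFieldType) n (F : ('I_n -> R) -> R) :
  pair_prop F -> forall a : 'I_n -> R, (forall k, 0 <= a k) ->
  forall i j, F (fun k => a (tperm i j k)) = F a.
Proof.
move=> hF a a0 i j.
have [->|ij] := eqVneq i j.
  by congr F; apply: functional_extensionality => k; rewrite tperm1 perm1.
have a'0 : forall k, 0 <= a (tperm i j k) by [].
have off : forall k, k != i -> k != j -> a (tperm i j k) = a k.
  by move=> k ki kj; rewrite tpermD // eq_sym.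
apply/eqP; rewrite eq_le; apply/andP; split.
- apply: (hF a (fun k => a (tperm i j k)) i j ij a0 a'0).
  + by move=> k ki kj; rewrite off.
  + by rewrite tpermL tpermR addrC.
  + by rewrite tpermL tpermR mulrC.
- apply: (hF (fun k => a (tperm i j k)) a i j ij a'0 a0).
  + by move=> k ki kj; rewrite off.
  + by rewrite tpermL tpermR addrC.
  + by rewrite tpermL tpermR mulrC.
Qed.

Lemma perm_invF (R : realFieldType) n (F : ('I_n -> R) -> R) :
  pair_prop F -> forall a : 'I_n -> R, (forall k, 0 <= a k) ->
  forall s : 'S_n, F (fun k => a (s k)) = F a.
Proof.
move=> hF a a0 s; have [ts -> _] := prod_tpermP s.
elim: ts a a0 => [|t ts IH] a a0.
  by congr F; apply: functional_extensionality => k; rewrite big_nil perm1.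
rewrite big_cons.
have -> : (fun k => a ((tperm t.1 t.2 * \prod_(t0 <- ts) tperm t0.1 t0.2)%g k))
   = (fun k => (fun l => a ((\prod_(t0 <- ts) tperm t0.1 t0.2)%g l)) (tperm t.1 t.2 k)).
  by apply: functional_extensionality => k; rewrite permM.
rewrite -[RHS](IH a a0).
exact: (@pair_swap _ _ _ hF (fun l => a ((\prod_(t0 <- ts) tperm t0.1 t0.2)%g l)) (fun l => a0 _) t.1 t.2).
Qed.

Lemma sum_ind1 (R : realFieldType) n (P : pred 'I_n) (j : 'I_n) (c : R) :
  \sum_(l | P l) ((l == j)%:R * c) = (P j)%:R * c.
Proof.
have [Pj|Pj] := boolP (P j).
  rewrite (bigD1 j) //= eqxx mul1r big1 ?addr0 ?Pj ?mul1r //.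
  by move=> l /andP[_ /negbTE ->]; rewrite mul0r.
rewrite mul0r big1 // => l Pl.
have -> : (l == j) = false by apply/negbTE; apply: contraNneq Pj => <-.
by rewrite mul0r.
Qed.

Definition nonneg (R : realFieldType) n (a : 'I_n -> R) := forall k, 0 <= a k.
Definition prefix_le (R : realFieldType) n (al be : 'I_n -> R) :=
  forall m, (m <= n)%N -> \sum_(k < n | (k < m)%N) al k <= \sum_(k < n | (k < m)%N) be k.

Lemma chain_step (R : realFieldType) n (F : ('I_n -> R) -> R) (al be : 'I_n -> R) :
  pair_prop F -> nonneg al -> (forall k l : 'I_n, (k <= l)%N -> al l <= al k) ->
  nonneg be -> prefix_le al be -> \sum_k al k = \sum_k be k ->
  forall k0, al k0 != be k0 ->
  exists be', [/\ F be <= F be', (#|[pred k | al k != be' k]| < #|[pred k | al k != be k]|)%N,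
     nonneg be', prefix_le al be' & \sum_k al k = \sum_k be' k].
Proof.
move=> hF al0 alsort be0 pre tot k0 hk0.
pose d k := be k - al k.
have hsum : \sum_k d k = 0 by rewrite sumrB tot subrr.
have [j0 hj0] : exists j, al j < be j.
  apply/existsP; apply: contraT; rewrite negb_exists => /forallP hall.
  have hle : forall k, 0 <= al k - be k by move=> k; rewrite subr_ge0 leNgt hall.
  have hz : \sum_k (al k - be k) = 0 by rewrite sumrB tot subrr.
  have := psumr_eq0P (P:=predT) (F:= fun k => al k - be k) (fun k _ => hle k) hz (i:=k0) isT.
  move=> /eqP; rewrite subr_eq0.
  by rewrite (negbTE hk0).
case: (@arg_maxnP _ j0 (fun k => al k < be k) (fun k : 'I_n => val k) hj0) => j hj jmax.
have [k1 hk1] : exists k : 'I_n, (j < k)%N && (be k < al k).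
  apply/existsP; apply: contraT; rewrite negb_exists => /forallP hall.
  have hge : forall k : 'I_n, (j < k)%N -> 0 <= d k.
    move=> k jk; move: (hall k); rewrite jk /= -leNgt => h; by rewrite /d subr_ge0.
  have : 0 < \sum_k d k.
    rewrite (bigID (fun k : 'I_n => (k < j)%N)) /=.
    rewrite [X in _ + X](bigD1 j) /=; last by rewrite ltnn.
    have h1 : 0 <= \sum_(i < n | (i < j)%N) d i.
      by rewrite /d sumrB subr_ge0; apply: pre; apply: ltnW.
    have h2 : 0 <= \sum_(i < n | ~~ (i < j)%N && (i != j)) d i.
      apply: sumr_ge0 => i /andP[]; rewrite -leqNgt => ji ij; apply: hge.
      by rewrite ltn_neqAle ji andbT; apply: contra ij => /eqP h; apply/eqP/val_inj.
    have h3 : 0 < d j by rewrite /d subr_gt0.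
    lra.
  by rewrite hsum ltxx.
case: (@arg_minnP _ k1 (fun k : 'I_n => (j < k)%N && (be k < al k)) (fun k : 'I_n => val k) hk1) => k /andP[jk hk] kmin.
have mid : forall l : 'I_n, (j < l)%N -> (l < k)%N -> be l = al l.
  move=> l jl lk; apply/eqP; rewrite eq_le; apply/andP; split.
    rewrite leNgt; apply/negP => h; have := jmax l h; rewrite /= leqNgt jl //.
  rewrite leNgt; apply/negP => h; have := kmin l; rewrite jl h => /(_ isT).
  by rewrite /= leqNgt lk.
have jnk : j != k by apply: contraTneq jk => ->; rewrite ltnn.
pose del := if be j - al j <= al k - be k then be j - al j else al k - be k.
have del_pos : 0 < del by rewrite /del; case: ifP => _; rewrite subr_gt0.
have del1 : del <= be j - al j by rewrite /del; case: ifP => // /negbT; rewrite -ltNge => /ltW.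
have del2 : del <= al k - be k by rewrite /del; case: ifP.
have aljk : al k <= al j by apply: alsort; apply: ltnW.
pose be' := fun l => if l == j then be j - del else if l == k then be k + del else be l.
have be'j : be' j = be j - del by rewrite /be' eqxx.
have be'k : be' k = be k + del by rewrite /be' eq_sym (negbTE jnk) eqxx.
have be'o : forall l, l != j -> l != k -> be' l = be l.
  by move=> l lj lk; rewrite /be' (negbTE lj) (negbTE lk).
have diff : forall l, be' l = be l + ((l == k)%:R - (l == j)%:R) * del.
  move=> l; rewrite /be'; case: (eqVneq l j) => [->|lj].
    by rewrite (negbTE jnk) /=; ring.
  case: (eqVneq l k) => [->|lk] /=; first by ring.
  by ring.
have sumP : forall P : pred 'I_n, \sum_(l | P l) be' l =
    \sum_(l | P l) be l + ((P k)%:R - (P j)%:R) * del.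
  move=> P; under eq_bigr do rewrite diff; rewrite big_split /=; congr (_ + _).
  under eq_bigr do rewrite mulrBl; rewrite sumrB.
  by rewrite !sum_ind1 mulrBl.
exists be'; split.
- apply: (hF be' be j k jnk) => //.
  + move=> l; case: (eqVneq l j) => [->|lj]; first by rewrite be'j; have := al0 j; lra.
    case: (eqVneq l k) => [->|lk]; first by rewrite be'k; have := be0 k; lra.
    by rewrite be'o.
  + by rewrite be'j be'k; ring.
  + rewrite be'j be'k.
    have : be k + del <= be j - del by lra.
    move=> h; nra.
- apply: proper_card; apply/properP; split.
    apply/subsetP => l; rewrite !inE.
    case: (eqVneq l j) => [->|lj]; first by rewrite (lt_eqF hj).
    case: (eqVneq l k) => [->|lk]; first by rewrite (gt_eqF hk).
    by rewrite be'o.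
  case: (lerP (be j - al j) (al k - be k)) => h.
    exists j; rewrite !inE ?(lt_eqF hj) //.
    by rewrite negbK be'j /del h; apply/eqP; ring.
  exists k; rewrite !inE ?(gt_eqF hk) //.
  by rewrite negbK be'k /del leNgt h /=; apply/eqP; ring.
- move=> l; case: (eqVneq l j) => [->|lj]; first by rewrite be'j; have := al0 j; lra.
  case: (eqVneq l k) => [->|lk]; first by rewrite be'k; have := be0 k; lra.
  by rewrite be'o.
- move=> m mn; rewrite sumP.
  case: (ltnP k m) => km.
    have jm : (j < m)%N by apply: ltn_trans km.
    by rewrite jm subrr mul0r addr0; apply: pre.
  case: (ltnP j m) => jm; last first.
    by rewrite subrr mul0r addr0; exact: pre.
  rewrite sub0r mulN1r.
  have key : \sum_(l < n | (l < m)%N) be l - \sum_(l < n | (l < m)%N) al l = \sum_(l < n | (l < j)%N) d l + d j.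
      rewrite -sumrB (bigID (fun l : 'I_n => (l < j)%N)) /=.
      have -> : \sum_(i < n | ((i < m)%N && (i < j)%N)) (be i - al i) =
                \sum_(i < n | (i < j)%N) d i.
        apply: eq_bigl => i; case: (ltnP i j) => ij; rewrite ?andbT ?andbF //.
        by rewrite (ltn_trans ij jm).
      congr (_ + _); rewrite (bigD1 j) /=; last by rewrite jm ltnn.
      rewrite big1 ?addr0 // => i /andP[/andP[im]]; rewrite -leqNgt => ji ij.
      have ji' : (j < i)%N by rewrite ltn_neqAle ji andbT; apply: contra ij => /eqP h; apply/eqP/val_inj.
      by rewrite mid ?subrr //; apply: leq_trans im km.
  have : 0 <= \sum_(l < n | (l < j)%N) d l.
    by rewrite /d sumrB subr_ge0; apply: pre; apply: ltnW.
  move: key; rewrite /d; lra.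
- by rewrite (sumP predT) /= subrr mul0r addr0.
Qed.

Lemma chain (R : realFieldType) n (F : ('I_n -> R) -> R) (al : 'I_n -> R) :
  pair_prop F -> nonneg al -> (forall k l : 'I_n, (k <= l)%N -> al l <= al k) ->
  forall N (be : 'I_n -> R), (#|[pred k | al k != be k]| <= N)%N ->
  nonneg be -> prefix_le al be -> \sum_k al k = \sum_k be k -> F be <= F al.
Proof.
move=> hF al0 alsort N; elim: N => [|N IH] be hN be0 pre tot.
  have -> : be = al; last by [].
    apply: functional_extensionality => k; apply/eqP; rewrite eq_sym; apply/negPn/negP => h.
    by move: hN; rewrite leqn0 => /eqP/card0_eq/(_ k); rewrite inE h.
  have [k0 hk0|hall] := pickP [pred k | al k != be k].
  have [be' [h1 h2 h3 h4 h5]] := chain_step hF al0 alsort be0 pre tot hk0.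
  apply: le_trans h1 _; apply: IH => //.
  by rewrite -ltnS; apply: leq_trans h2 hN.
have -> : be = al; last by [].
apply: functional_extensionality => k; move: (hall k); rewrite /= => /negbFE/eqP->.
by [].
Qed.

Definition srt (R : realFieldType) n (v : 'I_n -> R) :=
  sort (fun u w : R => w <= u) [seq v i | i <- enum 'I_n].

Lemma size_srt (R : realFieldType) n (v : 'I_n -> R) : size (srt v) = n.
Proof. by rewrite /srt size_sort size_map size_enum_ord. Qed.

Lemma srt_perm (R : realFieldType) n (v : 'I_n -> R) :
  exists p : 'S_n, forall i : 'I_n, nth 0 (srt v) i = v (p i).
Proof.
have : perm_eq (srt v) [tuple v i | i < n].
  by rewrite /srt perm_sort /=.
case/tuple_permP => p hp; exists p => i.
by rewrite hp -tnth_nth tnth_mktuple tnth_mktuple.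
Qed.

Lemma srt_sorted (R : realFieldType) n (v : 'I_n -> R) :
  forall k l : 'I_n, (k <= l)%N -> nth 0 (srt v) l <= nth 0 (srt v) k.
Proof.
move=> k l kl.
have hs : sorted (fun u w : R => w <= u) (srt v).
  by apply: sort_sorted => x y; rewrite orbC le_total.
have := @sorted_leq_nth _ (fun u w : R => w <= u) _ _ 0 (srt v) hs k l.
apply; rewrite ?inE ?size_srt //. all: try (by move=> x y z /= h1 h2; apply: le_trans h2 h1).
Qed.

Lemma srt_prefix (R : realFieldType) n (v : 'I_n -> R) m : (m <= n)%N ->
  \sum_(k < n | (k < m)%N) nth 0 (srt v) k = sum_largest m v.
Proof.
move=> mn; rewrite /sum_largest -/(srt v).
rewrite (big_nth 0) size_take size_srt.
have -> : (if (m < n)%N then m else n) = m by case: ltnP => // h; apply/eqP; rewrite eqn_leq mn h.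
rewrite big_mkord (big_ord_widen n (fun i => nth 0 (take m (srt v)) i)) //.
by apply: eq_bigr => i im; rewrite nth_take.
Qed.

Lemma schur_of_pair (R : realFieldType) n (F : ('I_n -> R) -> R) :
  pair_prop F -> schur_concave F.
Proof.
move=> hF a b a0 b0 [hmaj htot].
have [pa hpa] := srt_perm a.
have [pb hpb] := srt_perm b.
pose al := fun i : 'I_n => nth 0 (srt a) i.
pose be := fun i : 'I_n => nth 0 (srt b) i.
have eal : al = (fun i => a (pa i)) by apply: functional_extensionality => i; rewrite /al hpa.
have ebe : be = (fun i => b (pb i)) by apply: functional_extensionality => i; rewrite /be hpb.
have -> : F a = F al by rewrite eal (perm_invF hF a0).
have -> : F b = F be by rewrite ebe (perm_invF hF b0).
apply: (@chain _ _ F al hF _ _ n) => //.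
- by move=> k; rewrite eal.
- by move=> k l; apply: srt_sorted.
- by apply: leq_trans (max_card _) _; rewrite card_ord.
- by move=> k; rewrite ebe.
- by move=> m mn; rewrite /al /be !srt_prefix //; apply: hmaj.
- rewrite eal ebe.
  have ha : \sum_i a i = \sum_i a (pa i) by rewrite (reindex_inj (@perm_inj _ pa)).
  have hb : \sum_i b i = \sum_i b (pb i) by rewrite (reindex_inj (@perm_inj _ pb)).
  by rewrite -ha -hb.
Qed.

Definition psi (R : realFieldType) (c : R) (e : nat) : R := if odd e then 0 else c ^+ e./2.
Definition Psi (R : realFieldType) n (a : 'I_n -> R) (m : 'X_{1..n}) : R :=
  \prod_(i < n) psi (a i) (m i).
Definition Lf (R : realFieldType) n (a : 'I_n -> R) (p : {mpoly R[n]}) : R :=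
  \sum_(m <- msupp p) p@_m * Psi a m.

Lemma Lf_sub (R : realFieldType) n (a : 'I_n -> R) p (s : seq 'X_{1..n}) :
  uniq s -> {subset msupp p <= s} -> Lf a p = \sum_(m <- s) p@_m * Psi a m.
Proof.
move=> us sub; rewrite (bigID (fun m => m \in msupp p)) /=.
rewrite [X in _ = _ + X]big1 ?addr0; last first.
  by move=> m /memN_msupp_eq0 ->; rewrite mul0r.
rewrite -big_filter /Lf; apply: perm_big.
apply: uniq_perm; rewrite ?msupp_uniq ?filter_uniq // => m.
rewrite mem_filter; case: (boolP (m \in msupp p)) => //= h.
by rewrite (sub _ h).
Qed.

Lemma LfD (R : realFieldType) n (a : 'I_n -> R) p q : Lf a (p + q) = Lf a p + Lf a q.
Proof.
pose s := undup (msupp p ++ msupp q ++ msupp (p + q)).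
have us : uniq s by apply: undup_uniq.
rewrite !(@Lf_sub _ _ a _ s) //; last 3 first.
- by move=> m h; rewrite mem_undup !mem_cat h ?orbT.
- by move=> m h; rewrite mem_undup !mem_cat h ?orbT.
- by move=> m h; rewrite mem_undup !mem_cat h ?orbT.
by rewrite -big_split /=; apply: eq_bigr => m _; rewrite mcoeffD mulrDl.
Qed.

Lemma LfZ (R : realFieldType) n (a : 'I_n -> R) c p : Lf a (c *: p) = c * Lf a p.
Proof.
rewrite (@Lf_sub _ _ a _ (msupp p)) ?msupp_uniq //; last exact: msuppZ_le.
by rewrite /Lf big_distrr; apply: eq_bigr => m _; rewrite mcoeffZ -mulrA.
Qed.

Lemma Lf0 (R : realFieldType) n (a : 'I_n -> R) : Lf a 0 = 0.
Proof. by rewrite -(scale0r 0) LfZ mul0r. Qed.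

Lemma Lf_sum (R : realFieldType) n (a : 'I_n -> R) (I : Type) (r : seq I) (P : pred I) (F : I -> {mpoly R[n]}) :
  Lf a (\sum_(i <- r | P i) F i) = \sum_(i <- r | P i) Lf a (F i).
Proof. by apply: (big_morph _ (LfD a) (Lf0 a)). Qed.

Lemma LfX (R : realFieldType) n (a : 'I_n -> R) m : Lf a 'X_[m] = Psi a m.
Proof. by rewrite /Lf msuppX big_seq1 mcoeffX eqxx mul1r. Qed.

Lemma Lf_expand (R : realFieldType) n (a : 'I_n -> R) p q :
  Lf a (p * q) = \sum_(m <- msupp q) q@_m * Lf a (p * 'X_[m]).
Proof.
rewrite {1}(mpolyE q) mulr_sumr Lf_sum; apply: eq_bigr => m _.
by rewrite -scalerAr LfZ.
Qed.

Lemma psi2 (R : realFieldType) (c : R) e : psi c (e + 2) = c * psi c e.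
Proof.
rewrite /psi addn2 /= negbK; case: (odd e); first by rewrite mulr0.
by rewrite exprS.
Qed.

Lemma Psi_add2 (R : realFieldType) n (a : 'I_n -> R) m i :
  Psi a (m + U_(i) *+ 2)%MM = a i * Psi a m.
Proof.
rewrite /Psi (bigD1 i) //= [in RHS](bigD1 i) //= mulrA -psi2.
rewrite mnmDE mulmnE mnm1E eqxx mul1n; congr (_ * _).
apply: eq_bigr => k ki; rewrite mnmDE mulmnE mnm1E.
by rewrite eq_sym (negbTE ki) mul0n addn0.
Qed.

Lemma Lf_mulX2 (R : realFieldType) n (a : 'I_n -> R) p i :
  Lf a (p * 'X_i ^+ 2) = a i * Lf a p.
Proof.
rewrite mulrC Lf_expand.
under eq_bigr => m _ do rewrite mpolyXn -mpolyXD LfX addmC Psi_add2.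
by rewrite /Lf big_distrr; apply: eq_bigr => m _; rewrite mulrCA.
Qed.

Definition eqv (R : realFieldType) n (a : 'I_n -> R) (P P' : {mpoly R[n]}) :=
  forall M, Lf a (M * P) = Lf a (M * P').

Lemma eqv_refl (R : realFieldType) n (a : 'I_n -> R) P : eqv a P P.
Proof. by []. Qed.

Lemma eqv_trans (R : realFieldType) n (a : 'I_n -> R) P Q S : eqv a P Q -> eqv a Q S -> eqv a P S.
Proof. by move=> h1 h2 M; rewrite h1 h2. Qed.

Lemma eqv_mul (R : realFieldType) n (a : 'I_n -> R) P P' Q Q' :
  eqv a P P' -> eqv a Q Q' -> eqv a (P * Q) (P' * Q').
Proof.
move=> h1 h2 M; rewrite mulrA mulrAC h1 mulrAC h2.
by rewrite mulrA.
Qed.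

Lemma eqv_add (R : realFieldType) n (a : 'I_n -> R) P P' Q Q' :
  eqv a P P' -> eqv a Q Q' -> eqv a (P + Q) (P' + Q').
Proof. by move=> h1 h2 M; rewrite !mulrDr !LfD h1 h2. Qed.

Lemma eqv_exp (R : realFieldType) n (a : 'I_n -> R) P P' k :
  eqv a P P' -> eqv a (P ^+ k) (P' ^+ k).
Proof.
move=> h; elim: k => [|k IH]; first by rewrite !expr0.
by rewrite !exprS; apply: eqv_mul.
Qed.

Lemma eqv_X2 (R : realFieldType) n (a : 'I_n -> R) i :
  eqv a ('X_i ^+ 2) ((a i)%:MP).
Proof.
by move=> M; rewrite Lf_mulX2 [M * _]mulrC mul_mpolyC LfZ.
Qed.

Lemma eqv_Lf (R : realFieldType) n (a : 'I_n -> R) P P' : eqv a P P' -> Lf a P = Lf a P'.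
Proof. by move=> h; rewrite -(mul1r P) -(mul1r P') h. Qed.

Definition ro (R : realFieldType) n (i j : 'I_n) (p : {mpoly R[n]}) :=
  forall m, m \in msupp p -> (m i = 0)%N /\ (m j = 0)%N.

Lemma ro0 (R : realFieldType) n (i j : 'I_n) : ro i j (0 : {mpoly R[n]}).
Proof. by move=> m; rewrite mcoeff_msupp mcoeff0 eqxx. Qed.

Lemma roD (R : realFieldType) n (i j : 'I_n) (p q : {mpoly R[n]}) :
  ro i j p -> ro i j q -> ro i j (p + q).
Proof.
by move=> hp hq m /msuppD_le; rewrite mem_cat => /orP[/hp|/hq].
Qed.

Lemma ro_sum (R : realFieldType) n (i j : 'I_n) (I : Type) (r : seq I) (P : pred I) (F : I -> {mpoly R[n]}) :
  (forall x, P x -> ro i j (F x)) -> ro i j (\sum_(x <- r | P x) F x).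
Proof. by move=> h; apply: (big_ind (ro i j)) => //; [apply: ro0 | apply: roD]. Qed.

Lemma roM (R : realFieldType) n (i j : 'I_n) (p q : {mpoly R[n]}) :
  ro i j p -> ro i j q -> ro i j (p * q).
Proof.
move=> hp hq m /msuppM_le /allpairsP [[m1 m2] [/= h1 h2 ->]].
have [h1i h1j] := hp _ h1; have [h2i h2j] := hq _ h2.
by rewrite !mnmDE h1i h1j h2i h2j.
Qed.

Lemma ro1 (R : realFieldType) n (i j : 'I_n) : ro i j (1 : {mpoly R[n]}).
Proof. by move=> m; rewrite -mpolyX0 msuppX inE => /eqP ->; rewrite !mnm0E. Qed.

Lemma roX (R : realFieldType) n (i j u : 'I_n) : u != i -> u != j -> ro i j ('X_u : {mpoly R[n]}).
Proof.
move=> ui uj m; rewrite msuppX inE => /eqP ->.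
by rewrite !mnm1E (negbTE ui) (negbTE uj).
Qed.

Lemma roXn (R : realFieldType) n (i j : 'I_n) (p : {mpoly R[n]}) k : ro i j p -> ro i j (p ^+ k).
Proof.
move=> h; elim: k => [|k IH]; first by rewrite expr0; apply: ro1.
by rewrite exprS; apply: roM.
Qed.

Definition pc (R : realFieldType) n (p : {mpoly R[n]}) := forall m, 0 <= p@_m.

Lemma pcD (R : realFieldType) n (p q : {mpoly R[n]}) : pc p -> pc q -> pc (p + q).
Proof. by move=> hp hq m; rewrite mcoeffD addr_ge0. Qed.

Lemma pc_sum (R : realFieldType) n (I : Type) (r : seq I) (P : pred I) (F : I -> {mpoly R[n]}) :
  (forall x, P x -> pc (F x)) -> pc (\sum_(x <- r | P x) F x).
Proof.
move=> h; apply: (big_ind (@pc R n)) => //; last by apply: pcD.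
by move=> m; rewrite mcoeff0.
Qed.

Lemma pcM (R : realFieldType) n (p q : {mpoly R[n]}) : pc p -> pc q -> pc (p * q).
Proof.
move=> hp hq m; rewrite mcoeffM; apply: sumr_ge0 => k _; exact: mulr_ge0.
Qed.

Lemma pcX (R : realFieldType) n (m0 : 'X_{1..n}) : pc ('X_[m0] : {mpoly R[n]}).
Proof. by move=> m; rewrite mcoeffX ler0n. Qed.

Lemma pcXn (R : realFieldType) n (p : {mpoly R[n]}) k : pc p -> pc (p ^+ k).
Proof.
move=> h; elim: k => [|k IH]; first by rewrite expr0 -mpolyX0; apply: pcX.
by rewrite exprS; apply: pcM.
Qed.

Lemma psi0 (R : realFieldType) (c : R) : psi c 0 = 1.
Proof. by rewrite /psi /= expr0. Qed.

Lemma Psi_pair (R : realFieldType) n (a : 'I_n -> R) (i j : 'I_n) e1 e2 (m : 'X_{1..n}) :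
  i != j -> (m i = 0)%N -> (m j = 0)%N ->
  Psi a (U_(i) *+ e1 + U_(j) *+ e2 + m)%MM = psi (a i) e1 * psi (a j) e2 * Psi a m.
Proof.
move=> ij mi mj.
have co : forall k, (U_(i) *+ e1 + U_(j) *+ e2 + m)%MM k = ((i == k) * e1 + (j == k) * e2 + m k)%N.
  by move=> k; rewrite !mnmDE !mulmnE !mnm1E.
rewrite /Psi (bigD1 i) //= [in RHS](bigD1 i) //= (bigD1 j) //=; last by rewrite eq_sym.
rewrite [in RHS](bigD1 j) /=; last by rewrite eq_sym.
rewrite !co eqxx (negbTE ij) eq_sym (negbTE ij) eqxx mi mj /= psi0 !mul0n !mul1n !addn0 add0n psi0.
rewrite !mul1r !mulrA; congr (_ * _).
apply: eq_bigr => k /andP[ki kj]; rewrite co.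
by rewrite eq_sym (negbTE ki) eq_sym (negbTE kj) !mul0n.
Qed.

Lemma Lmul_rest (R : realFieldType) n (a : 'I_n -> R) (i j : 'I_n) e1 e2 (Q : {mpoly R[n]}) :
  i != j -> ro i j Q ->
  Lf a ('X_i ^+ e1 * 'X_j ^+ e2 * Q) = psi (a i) e1 * psi (a j) e2 * Lf a Q.
Proof.
move=> ij hQ; rewrite Lf_expand.
transitivity (\sum_(m <- msupp Q) Q@_m * (psi (a i) e1 * psi (a j) e2 * Psi a m)).
  rewrite !big_seq; apply: eq_bigr => m hm; have [mi mj] := hQ m hm.
  by rewrite !mpolyXn -!mpolyXD LfX Psi_pair.
by rewrite /Lf big_distrr; apply: eq_bigr => m _; rewrite mulrCA.
Qed.

Lemma Lf_rest_indep (R : realFieldType) n (a b : 'I_n -> R) (i j : 'I_n) (Q : {mpoly R[n]}) :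
  ro i j Q -> (forall k, k != i -> k != j -> a k = b k) -> Lf a Q = Lf b Q.
Proof.
move=> hQ hab; rewrite /Lf !big_seq; apply: eq_bigr => m hm; congr (_ * _).
have [mi mj] := hQ m hm; apply: eq_bigr => k _.
case: (eqVneq k i) => [->|ki]; first by rewrite mi !psi0.
case: (eqVneq k j) => [->|kj]; first by rewrite mj !psi0.
by rewrite hab.
Qed.

Lemma psi_ge0 (R : realFieldType) (c : R) e : 0 <= c -> 0 <= psi c e.
Proof. by move=> c0; rewrite /psi; case: odd => //; apply: exprn_ge0. Qed.

Lemma Lf_ge0 (R : realFieldType) n (a : 'I_n -> R) (Q : {mpoly R[n]}) :
  (forall k, 0 <= a k) -> pc Q -> 0 <= Lf a Q.
Proof.
move=> a0 hQ; apply: sumr_ge0 => m _; apply: mulr_ge0 => //.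
by apply: prodr_ge0 => k _; apply: psi_ge0.
Qed.

Definition theta (R : realFieldType) (s p : R) (m h : nat) : R :=
  if odd h then 0 else
  \sum_(t < h./2.+1) ('C(h./2, t))%:R * s ^+ (h./2 - t) * 2 ^+ t * psi p (m + t).

Lemma psi_mul (R : realFieldType) (c d : R) e : psi c e * psi d e = psi (c * d) e.
Proof. by rewrite /psi; case: odd; rewrite ?mul0r // exprMn. Qed.

Lemma psi_oddS (R : realFieldType) (c d : R) e : psi c e.+1 * psi d e = 0.
Proof. by rewrite /psi /=; case: odd; rewrite /= ?mul0r ?mulr0. Qed.

Lemma psi_oddS' (R : realFieldType) (c d : R) e : psi c e * psi d e.+1 = 0.
Proof. by rewrite mulrC psi_oddS. Qed.

Lemma term_conv (R : realFieldType) n (D : {mpoly R[n]}) (c : R) e t C :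
  (c%:MP ^+ e * (D *+ 2) ^+ t) *+ C = (C%:R * c ^+ e * 2 ^+ t) *: D ^+ t.
Proof.
rewrite -(scaler_nat 2 D) exprZn -rmorphXn /= mul_mpolyC scalerA -scaler_nat scalerA.
by rewrite mulrA.
Qed.

Lemma theta_lemma (R : realFieldType) n (a : 'I_n -> R) (i j : 'I_n) m h (Q : {mpoly R[n]}) :
  i != j -> ro i j Q ->
  Lf a (('X_i * 'X_j) ^+ m * ('X_i + 'X_j) ^+ h * Q) =
  theta (a i + a j) (a i * a j) m h * Lf a Q.
Proof.
move=> ij hQ.
set D := 'X_i * 'X_j; set k := h./2; pose E : {mpoly R[n]} := ('X_i + 'X_j) ^+ (odd h : nat).
have hsq : eqv a (('X_i + 'X_j) ^+ 2) ((a i + a j)%:MP + D *+ 2).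
  have -> : ('X_i + 'X_j) ^+ 2 = 'X_i ^+ 2 + 'X_j ^+ 2 + D *+ 2 by rewrite /D sqrrD; ring.
  rewrite mpolyCD; apply: eqv_add; last exact: eqv_refl.
  by apply: eqv_add; apply: eqv_X2.
have hh : ('X_i + 'X_j) ^+ h = (('X_i + 'X_j) ^+ 2) ^+ k * E.
  by rewrite /E /k -exprM -exprD mul2n addnC odd_double_half.
have -> : D ^+ m * ('X_i + 'X_j) ^+ h * Q = (D ^+ m * Q * E) * (('X_i + 'X_j) ^+ 2) ^+ k.
  by rewrite hh; ring.
rewrite (eqv_exp k hsq) exprDn mulr_sumr Lf_sum.
under eq_bigr => t _ do rewrite term_conv -scalerAr LfZ.
rewrite /theta; case hodd: (odd h).
- rewrite mul0r; apply: big1 => t _.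
  have -> : D ^+ m * Q * E * D ^+ t =
     'X_i ^+ (m + t).+1 * 'X_j ^+ (m + t) * Q + 'X_i ^+ (m + t) * 'X_j ^+ (m + t).+1 * Q.
    by rewrite /E hodd /D /= expr1 !exprS !exprD !exprMn; ring.
  by rewrite LfD !Lmul_rest // psi_oddS psi_oddS' !mul0r addr0 mulr0.
- rewrite mulr_suml; apply: eq_bigr => t _.
  have -> : D ^+ m * Q * E * D ^+ t = 'X_i ^+ (m + t) * 'X_j ^+ (m + t) * Q.
    by rewrite /E hodd /D /= expr0 !exprD !exprMn; ring.
  by rewrite Lmul_rest // psi_mul mulrA.
Qed.

Definition Cpol (R : realFieldType) n : {mpoly R[n]} :=
  \sum_(u < n) \sum_(v < n | u != v) 'X_u * 'X_v.
Definition restp n (i j : 'I_n) (u : 'I_n) := (u != i) && (u != j).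
Definition Zrest (R : realFieldType) n (i j : 'I_n) : {mpoly R[n]} :=
  \sum_(u | restp i j u) 'X_u.
Definition Wrest (R : realFieldType) n (i j : 'I_n) : {mpoly R[n]} :=
  \sum_(u | restp i j u) \sum_(v | restp i j v && (u != v)) 'X_u * 'X_v.

Lemma Cp_split (R : realFieldType) n (i j : 'I_n) : i != j ->
  Cpol R n = ('X_i * 'X_j) *+ 2 + (('X_i + 'X_j) * Zrest R i j) *+ 2 + Wrest R i j.
Proof.
move=> ij.
have ji : j != i by rewrite eq_sym.
pose f (u : 'I_n) : {mpoly R[n]} := \sum_(v < n | u != v) 'X_u * 'X_v.
have hC : Cpol R n = \sum_u f u by [].
have fi : f i = 'X_i * 'X_j + 'X_i * Zrest R i j.
  rewrite /f (bigD1 j) //= /Zrest mulr_sumr; congr (_ + _).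
  by apply: eq_bigl => v; rewrite /restp eq_sym.
have fj : f j = 'X_j * 'X_i + 'X_j * Zrest R i j.
  rewrite /f (bigD1 i) //= /Zrest mulr_sumr; congr (_ + _).
  by apply: eq_bigl => v; rewrite /restp eq_sym andbC.
have fr : \sum_(u | restp i j u) f u = Zrest R i j * 'X_i + Zrest R i j * 'X_j + Wrest R i j.
  rewrite /Zrest /Wrest !mulr_suml -!big_split /=; apply: eq_bigr => u /andP[ui uj].
  rewrite /f (bigD1 i) /=; last by []. rewrite (bigD1 j) /=; last by rewrite uj ji.
  rewrite addrA; congr (_ + _ + _); apply: eq_bigl => v; rewrite /restp.
  by rewrite [RHS]andbC andbA.
rewrite hC (bigD1 i) //= (bigD1 j) //= fi fj.
have -> : \sum_(u < n | (u != i) && (u != j)) f u = \sum_(u | restp i j u) f u by [].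
rewrite fr; rewrite !mulr2n; ring.
Qed.


Lemma rearr (T : comRingType) (D X Z W : T) a h l c1 c2 :
  (D *+ 2) ^+ a * ((X * Z) *+ 2) ^+ h *+ c1 * W ^+ l *+ c2 =
  (2 ^ a * 2 ^ h * c1 * c2)%:R * (D ^+ a * X ^+ h * (Z ^+ h * W ^+ l)).
Proof.
rewrite mulr_natl !exprMn_n exprMn.
rewrite !(mulrnAl, mulrnAr) -!mulrnA.
congr (_ *+ _); first by rewrite !mulrA.
by rewrite !mulnA [(2 ^ a * 2 ^ h)%N]mulnC.
Qed.

Lemma Lf_natmul (R : realFieldType) n (a : 'I_n -> R) (k : nat) (T : {mpoly R[n]}) :
  Lf a (k%:R * T) = k%:R * Lf a T.
Proof. by rewrite -mpolyC_nat mul_mpolyC LfZ. Qed.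

Lemma roZ (R : realFieldType) n (i j : 'I_n) : ro i j (Zrest R i j).
Proof. by apply: ro_sum => u /andP[]; apply: roX. Qed.

Lemma roW (R : realFieldType) n (i j : 'I_n) : ro i j (Wrest R i j).
Proof.
apply: ro_sum => u /andP[ui uj]; apply: ro_sum => v /andP[/andP[vi vj] _].
by apply: roM; apply: roX.
Qed.

Lemma LfCq (R : realFieldType) n (a : 'I_n -> R) (i j : 'I_n) q : i != j ->
  Lf a (Cpol R n ^+ q) = \sum_(l < q.+1) \sum_(h < (q - l).+1)
   (2 ^ (q - l - h) * 2 ^ h * 'C(q - l, h) * 'C(q, l))%:R *
   theta (a i + a j) (a i * a j) (q - l - h) h * Lf a (Zrest R i j ^+ h * Wrest R i j ^+ l).
Proof.
move=> ij; rewrite (Cp_split R ij) exprDn Lf_sum; apply: eq_bigr => l _.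
rewrite exprDn mulr_suml -sumrMnl Lf_sum; apply: eq_bigr => h _.
rewrite rearr Lf_natmul (@theta_lemma _ _ a i j) ?mulrA //.
by apply: roM; apply: roXn; [apply: roZ | apply: roW].
Qed.

Lemma psi_mono (R : realFieldType) (p p' : R) e : 0 <= p' -> p' <= p -> psi p' e <= psi p e.
Proof.
move=> p'0 pp; rewrite /psi; case: odd => //.
by apply: lerXn2r; rewrite ?nnegrE //; apply: le_trans pp.
Qed.

Lemma theta_mono (R : realFieldType) (s p p' : R) m h :
  0 <= s -> 0 <= p' -> p' <= p -> theta s p' m h <= theta s p m h.
Proof.
move=> s0 p'0 pp; rewrite /theta; case: odd => //.
apply: ler_sum => t _; apply: ler_wpM2l; last exact: psi_mono.
by rewrite !mulr_ge0 ?exprn_ge0.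
Qed.

Lemma pcZ (R : realFieldType) n (i j : 'I_n) : pc (Zrest R i j).
Proof. by apply: pc_sum => u _; apply: pcX. Qed.

Lemma pcW (R : realFieldType) n (i j : 'I_n) : pc (Wrest R i j).
Proof. by apply: pc_sum => u _; apply: pc_sum => v _; apply: pcM; apply: pcX. Qed.

Lemma pairF (R : realFieldType) n q : pair_prop (fun a : 'I_n -> R => Lf a (Cpol R n ^+ q)).
Proof.
move=> a b i j ij a0 b0 hab hs hp /=.
rewrite !(LfCq _ _ ij); apply: ler_sum => l _; apply: ler_sum => h _.
rewrite -(@Lf_rest_indep _ _ a b i j); last by [].
  rewrite -hs; apply: ler_wpM2r.
    by apply: Lf_ge0 => //; apply: pcM; apply: pcXn; [apply: pcZ | apply: pcW].
  apply: ler_wpM2l => //; apply: theta_mono.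
  - by apply: addr_ge0.
  - by apply: mulr_ge0.
  - exact: hp.
by apply: roM; apply: roXn; [apply: roZ | apply: roW].
Qed.

Lemma chaos_eval (R : realFieldType) n (x : 'I_n -> R) r :
  chaos x r = (Cpol R n).@[fun i => x i * rsign (r i)].
Proof.
rewrite /chaos /Cpol rmorph_sum; apply: eq_bigr => u _.
rewrite rmorph_sum; apply: eq_bigr => v _.
by rewrite rmorphM /= !mevalXU; ring.
Qed.

Lemma avg_one (R : realFieldType) (x : R) e :
  2^-1 * \sum_(b : bool) (x * rsign b) ^+ e = psi (x ^+ 2) e.
Proof.
rewrite big_bool /= /rsign /psi mulr1 exprMn -signr_odd.
case ho: (odd e).
  by rewrite expr1 mulrN1 subrr mulr0.
rewrite expr0 mulr1 -exprM mul2n.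
have -> : (e./2).*2 = e by rewrite -[RHS]odd_double_half ho.
set y := x ^+ e; lra.
Qed.

Lemma avg_mono (R : realFieldType) n (x : 'I_n -> R) (m : 'X_{1..n}) :
  (2 ^+ n)^-1 * \sum_(r : {ffun 'I_n -> bool}) \prod_i (x i * rsign (r i)) ^+ m i =
  Psi (fun i => x i ^+ 2) m.
Proof.
rewrite -(bigA_distr_bigA (fun i b => (x i * rsign b) ^+ m i)).
have -> : (2 ^+ n)^-1 = \prod_(i < n) (2^-1 : R) by rewrite prodr_const card_ord exprVn.
rewrite -big_split /=; apply: eq_bigr => i _; exact: avg_one.
Qed.

Lemma avg_eval (R : realFieldType) n (x : 'I_n -> R) (p : {mpoly R[n]}) :
  (2 ^+ n)^-1 * \sum_(r : {ffun 'I_n -> bool}) p.@[fun i => x i * rsign (r i)] =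
  Lf (fun i => x i ^+ 2) p.
Proof.
under eq_bigr do rewrite mevalE.
rewrite exchange_big /= big_distrr /Lf; apply: eq_bigr => m _.
by rewrite -big_distrr /= mulrCA avg_mono.
Qed.

Unset Implicit Arguments.

Theorem theorem2 (R : realFieldType) (n q : nat) :
  (1 <= n)%N -> (1 <= q)%N ->
  exists f : ('I_n -> R) -> R,
    schur_concave f /\
    (forall x : 'I_n -> R, Rq q x = f (fun i => x i ^+ 2)).
Proof.
move=> _ _; exists (fun a => Lf a (Cpol R n ^+ q)); split.
  by apply: schur_of_pair; apply: pairF.
move=> x; rewrite /Rq.
under eq_bigr do rewrite chaos_eval -rmorphXn.
exact: avg_eval.
Qed.
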